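(* Let $d\ge1$, $L\ge1$. For every sequence $(x_t)\subseteq[-1,1]^d$, every $f^\star\in\mathcal{H}_L$ with $y_t=f^\star(x_t)$, and every horizon $T\ge2$, the envelope strategy satisfies $\sum_{t=1}^T|y_t-\hat y_t|^d\le 8^dL^d(1+\log T)$.
   Context: $\mathcal{H}_L$ is the set of functions $h:[-1,1]^d\to[0,1]$ with $|h(x)-h(x')|\le L\|x-x'\|_\infty$. Envelope strategy: at round $t$, with past data $(x_s,y_s)_{s<t}$, define $\underline h_t(x)=\max\{0,\max_{s<t}(y_s-L\|x-x_s\|_\infty)\}$ and $\overline h_t(x)=\min\{1,\min_{s<t}(y_s+L\|x-x_s\|_\infty)\}$ (with $\max_{\emptyset}=-\infty$, $\min_\emptyset=+\infty$), and predict $\hat y_t=\frac12(\underline h_t(x_t)+\overline h_t(x_t))$. $\log$ is the natural logarithm. *)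

(* Defs.v *)
From HB Require Import structures.
From mathcomp Require Import all_boot all_order all_algebra.
From mathcomp Require Import all_classical all_reals all_analysis.
Set Implicit Arguments. Unset Strict Implicit. Unset Printing Implicit Defensive.
Import Order.TTheory GRing.Theory Num.Theory.
Local Open Scope ring_scope.

Section Envelope.
Variables (R : realType) (d : nat).

Definition dist_inf (x x' : 'I_d -> R) : R :=
  \big[Num.max/0]_(i < d) `|x i - x' i|.

Definition in_cube (x : 'I_d -> R) : Prop := forall i, -1 <= x i <= 1.

Definition in_HL (L : R) (h : ('I_d -> R) -> R) : Prop :=
  (forall x, in_cube x -> 0 <= h x <= 1) /\
  (forall x x', in_cube x -> in_cube x' -> `|h x - h x'| <= L * dist_inf x x').

(* Rounds are indexed 0,1,2,...; at round t the past data are rounds s < t. *)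
Definition env_low (L : R) (xs : nat -> 'I_d -> R) (ys : nat -> R) (t : nat)
  (x : 'I_d -> R) : R :=
  \big[Num.max/0]_(s < t) (ys s - L * dist_inf x (xs s)).

Definition env_up (L : R) (xs : nat -> 'I_d -> R) (ys : nat -> R) (t : nat)
  (x : 'I_d -> R) : R :=
  \big[Num.min/1]_(s < t) (ys s + L * dist_inf x (xs s)).

Definition env_pred (L : R) (xs : nat -> 'I_d -> R) (ys : nat -> R) (t : nat) : R :=
  (env_low L xs ys t (xs t) + env_up L xs ys t (xs t)) / 2.

End Envelope.

(* Main.v *)
Require Import Defs.
From HB Require Import structures.
From mathcomp Require Import all_boot all_order all_algebra.
From mathcomp Require Import all_classical all_reals all_analysis.
From mathcomp Require Import ring lra.
Import Order.TTheory GRing.Theory Num.Theory.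
Set Implicit Arguments. Unset Strict Implicit.
Local Open Scope ring_scope.

Section Aux.
Variable R : realType.

Lemma bmax_ge (t : nat) (F : 'I_t -> R) s : F s <= \big[Num.max/0]_(i < t) F i.
Proof. by rewrite (bigD1 s) //= le_max lexx. Qed.

Lemma bmax_ge0 (t : nat) (F : 'I_t -> R) : 0 <= \big[Num.max/0]_(i < t) F i.
Proof. by apply: (big_rec (fun z => 0 <= z)) => // i x _ Hx; rewrite le_max Hx orbT. Qed.

Lemma bmax_le (t : nat) (F : 'I_t -> R) z :
  0 <= z -> (forall i, F i <= z) -> \big[Num.max/0]_(i < t) F i <= z.
Proof.
move=> z0 H; apply: (big_ind (fun w => w <= z)) => //.
  by move=> x y Hx Hy; rewrite ge_max Hx Hy.
Qed.

Lemma bmin_le (t : nat) (F : 'I_t -> R) s : \big[Num.min/1]_(i < t) F i <= F s.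
Proof. by rewrite (bigD1 s) //= ge_min lexx. Qed.

Lemma bmin_le1 (t : nat) (F : 'I_t -> R) : \big[Num.min/1]_(i < t) F i <= 1.
Proof. by apply: (big_rec (fun z => z <= 1)) => // i x _ Hx; rewrite ge_min Hx orbT. Qed.

Lemma bmin_ge (t : nat) (F : 'I_t -> R) z :
  z <= 1 -> (forall i, z <= F i) -> z <= \big[Num.min/1]_(i < t) F i.
Proof.
move=> z0 H; apply: (big_ind (fun w => z <= w)) => //.
  by move=> x y Hx Hy; rewrite le_min Hx Hy.
Qed.
End Aux.

Section Main.
Variables (R : realType) (d : nat) (L : R) (xs : nat -> 'I_d -> R)
  (f : ('I_d -> R) -> R).
Hypothesis L1 : 1 <= L.
Hypothesis Hcube : forall t, in_cube (xs t).
Hypothesis HL : in_HL L f.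

Let ys := fun s => f (xs s).
Let lo t := env_low L xs ys t (xs t).
Let up t := env_up L xs ys t (xs t).
Let e t := `|f (xs t) - env_pred L xs ys t|.

Lemma lo_ge t (s : 'I_t) : ys s - L * dist_inf (xs t) (xs s) <= lo t.
Proof. rewrite /lo /env_low; exact: (bmax_ge (fun s : 'I_t => ys s - L * dist_inf (xs t) (xs s))). Qed.

Lemma up_le t (s : 'I_t) : up t <= ys s + L * dist_inf (xs t) (xs s).
Proof. rewrite /up /env_up; exact: (bmin_le (fun s : 'I_t => ys s + L * dist_inf (xs t) (xs s))). Qed.

Lemma env_ok t : 0 <= lo t /\ lo t <= f (xs t) /\ f (xs t) <= up t /\ up t <= 1.
Proof.
have [Hb Hl] := HL.
have f01 := Hb _ (Hcube t).
move/andP: f01 => [f0 f1].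
split; first exact: bmax_ge0.
split.
  apply: bmax_le => // s.
  have := Hl _ _ (Hcube t) (Hcube s); rewrite ler_norml => /andP[h1 h2].
  rewrite /ys; lra.
split; last exact: bmin_le1.
apply: bmin_ge => // s.
have := Hl _ _ (Hcube t) (Hcube s); rewrite ler_norml => /andP[h1 h2].
rewrite /ys; lra.
Qed.

Lemma e_half t : e t <= 2^-1.
Proof.
have [h1 [h2 [h3 h4]]] := env_ok t.
rewrite /e /env_pred -/(lo t) -/(up t) ler_norml; apply/andP; split; lra.
Qed.

Lemma e_dist t (s : 'I_t) : e t <= L * dist_inf (xs t) (xs s).
Proof.
have [h1 [h2 [h3 h4]]] := env_ok t.
have h5 := lo_ge s; have h6 := up_le s.
rewrite /e /env_pred -/(lo t) -/(up t) ler_norml; apply/andP; split; lra.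
Qed.

Lemma cidx_lt k n : (minn n (2^k).-1 < 2^k)%N.
Proof. by apply: leq_ltn_trans (geq_minr _ _) _; rewrite ltn_predL expn_gt0. Qed.

Definition cidx k (v : R) : 'I_(2^k) :=
  Ordinal (cidx_lt k (Num.truncn ((v + 1) * 2 ^+ k / 2))).

Lemma cidx_bnd k v : -1 <= v <= 1 ->
  (cidx k v)%:R <= (v + 1) * 2 ^+ k / 2 <= (cidx k v)%:R + 1.
Proof.
move=> /andP[v0 v1].
set a := (v + 1) * 2 ^+ k / 2.
have p0 : 0 < (2 : R) ^+ k by apply: exprn_gt0.
have a0 : 0 <= a by rewrite /a; apply: divr_ge0 => //; apply: mulr_ge0 => //; lra.
have a1 : a <= 2 ^+ k.
  rewrite /a ler_pdivrMr //; rewrite mulrC ler_pM2l //; lra.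
have /andP[t1 t2] := truncn_itv a0.
rewrite /cidx /=.
case: (leqP (Num.truncn a) (2^k).-1) => h /=.
  rewrite t1 /= natr1; exact: ltW.
apply/andP; split.
  apply: le_trans t1; rewrite ler_nat; exact: ltnW.
by rewrite natr1 prednK ?expn_gt0 // natrX.
Qed.

Definition cell k (x : 'I_d -> R) : {ffun 'I_d -> 'I_(2^k)} :=
  [ffun i => cidx k (x i)].

Lemma cell_close k x x' : in_cube x -> in_cube x' -> cell k x = cell k x' ->
  dist_inf x x' <= 2 / 2 ^+ k.
Proof.
move=> cx cx' E.
have p0 : 0 < (2 : R) ^+ k by apply: exprn_gt0.
rewrite /dist_inf; apply: bmax_le => [|i]; first by apply: divr_ge0 => //; exact: ltW.
have Ei : cidx k (x i) = cidx k (x' i).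
  by have := congr1 (fun g : {ffun 'I_d -> 'I_(2^k)} => g i) E; rewrite !ffunE.
have := cidx_bnd k (cx i); have := cidx_bnd k (cx' i); rewrite Ei.
set c := (cidx k (x' i))%:R.
set a := (x i + 1) * 2 ^+ k / 2; set b := (x' i + 1) * 2 ^+ k / 2.
move=> /andP[h1 h2] /andP[h3 h4].
have -> : x i - x' i = (a - b) * (2 / 2 ^+ k).
  rewrite /a /b; field; exact: lt0r_neq0.
rewrite normrM (ger0_norm (x := 2 / 2 ^+ k)); last by apply: divr_ge0 => //; exact: ltW.
apply: ler_piMl; first by apply: divr_ge0 => //; exact: ltW.
rewrite ler_norml; apply/andP; split; lra.
Qed.

Definition newb k t : bool :=
  (0 < k)%N && ~~ [exists s : 'I_t, cell k (xs s) == cell k (xs t)].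

Lemma L0 : 0 <= L. Proof. have := L1; lra. Qed.

Lemma e_not_new k t : ~~ newb k t -> e t <= L * (2 / 2 ^+ k).
Proof.
rewrite /newb negb_and negbK; case: k => [_|k /= /existsP[s /eqP Es]].
  rewrite expr0 divr1; apply: le_trans (e_half t) _; have := L1; lra.
apply: le_trans (e_dist s) _; apply: ler_wpM2l; first exact: L0.
exact: cell_close (Hcube t) (Hcube s) (esym Es).
Qed.

Definition c k := (L * (2 / 2 ^+ k)) ^+ d.

Lemma c_ge0 k : 0 <= c k.
Proof. apply: exprn_ge0; apply: mulr_ge0; first exact: L0.
by apply: divr_ge0 => //; apply: exprn_ge0. Qed.

Lemma powle (a b : R) : 0 <= a -> a <= b -> a ^+ d <= b ^+ d.
Proof. move=> a0 ab; apply: lerXn2r; rewrite ?nnegrE //; exact: le_trans ab. Qed.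

Lemma e_ge0 t : 0 <= e t. Proof. exact: normr_ge0. Qed.

Lemma step t K : e t ^+ d <=
  \sum_(k < K) (if newb k.+1 t then c k else 0) + (if newb K t then 0 else c K).
Proof.
elim: K => [|K IH].
  rewrite big_ord0 add0r /=; apply: powle (e_ge0 t) _; exact: e_not_new.
rewrite big_ord_recr /=.
have S0 : 0 <= \sum_(i < K) (if newb i.+1 t then c i else 0).
  by apply: sumr_ge0 => i _; case: ifP => _ //; exact: c_ge0.
case Hn: (newb K.+1 t).
  rewrite addr0; apply: le_trans IH _; rewrite lerD2l.
  by case: ifP => _ //; exact: c_ge0.
have h : e t ^+ d <= c K.+1 by apply: powle (e_ge0 t) _; apply: e_not_new; rewrite Hn.
apply: le_trans h _; rewrite addr0 -{1}(add0r (c K.+1)) lerD2r //.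
Qed.

Lemma count_new T k : (#|[pred t : 'I_T | newb k t]| <= expn (expn 2 k) d)%N.
Proof.
rewrite -(card_in_imset (f := fun t : 'I_T => cell k (xs t))).
  apply: leq_trans (max_card _) _; by rewrite card_ffun !card_ord.
move=> t1 t2; rewrite !inE => h1 h2 E.
case: (ltngtP t1 t2) => [lt|lt|/val_inj//].
  move/andP: h2 => [_ /existsPn H]; have := H (Ordinal lt); by rewrite /= E eqxx.
move/andP: h1 => [_ /existsPn H]; have := H (Ordinal lt); by rewrite /= E eqxx.
Qed.

Lemma sum_bound T K : \sum_(t < T) e t ^+ d <=
  \sum_(k < K) c k *+ expn (expn 2 k.+1) d + c K *+ T.
Proof.
apply: le_trans (ler_sum _ (fun (t : 'I_T) _ => step t K)) _.
rewrite big_split /=; apply: lerD.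
  rewrite exchange_big /=; apply: ler_sum => k _.
  rewrite -big_mkcond /= sumr_const -(mulr_natr (c k) #|_|).
  rewrite -(mulr_natr (c k) (expn _ _)); apply: ler_wpM2l; first exact: c_ge0.
  rewrite ler_nat; exact: count_new.
apply: (@le_trans _ _ (\sum_(t < T) c K)).
  by apply: ler_sum => t _; case: ifP => _ //; exact: c_ge0.
by rewrite sumr_const card_ord.
Qed.

Lemma term_eq k : c k *+ expn (expn 2 k.+1) d = (4 * L) ^+ d.
Proof.
have p0 : (2 : R) ^+ k != 0 by rewrite expf_neq0.
rewrite -mulr_natr !natrX /c -exprMn; congr (_ ^+ _); rewrite exprS; field; exact: p0.
Qed.

Lemma last_le K T : (0 < d)%N -> (T <= 2 ^ K)%N -> c K *+ T <= (2 * L) ^+ d.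
Proof.
move=> d0 TK.
have p0 : (0 : R) < 2 ^+ K by apply: exprn_gt0.
have pd : (0 : R) < (2 ^+ K) ^+ d by apply: exprn_gt0.
rewrite -mulr_natr /c (_ : L * (2 / 2 ^+ K) = (2 * L) / 2 ^+ K); last first.
  by field; exact: lt0r_neq0.
rewrite expr_div_n -mulrA; apply: ler_piMr.
  by apply: exprn_ge0; have := L1; lra.
rewrite mulrC ler_pdivrMr // mul1r.
apply: (@le_trans _ _ (2 ^+ K)); last by apply: ler_eXnr => //; apply: exprn_ege1; lra.
by rewrite -(natrX R 2 K) ler_nat.
Qed.
End Main.

Lemma ln2_ge (R : realType) : 2^-1 <= ln (2 : R).
Proof.
have h := @le_ln1Dx R (- 2^-1) ltac:(lra).
rewrite (_ : 1 + - 2^-1 = (2 : R)^-1) in h; last by field.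
rewrite lnV ?posrE // in h; lra.
Qed.

Theorem corollaryA5 (R : realType) (d : nat) (L : R) (xs : nat -> 'I_d -> R)
  (fstar : ('I_d -> R) -> R) (T : nat) :
  (1 <= d)%N -> 1 <= L ->
  (forall t, in_cube (xs t)) ->
  in_HL L fstar ->
  (2 <= T)%N ->
  \sum_(t < T) `|fstar (xs t) - env_pred L xs (fun s => fstar (xs s)) t| ^+ d
    <= 8 ^+ d * L ^+ d * (1 + ln (T%:R : R)).
Proof.
move=> d1 L1 Hc HL T2.
set n := trunc_log 2 T.
have Tn : (T <= 2 ^ n.+1)%N := ltnW (trunc_log_ltn T (isT : (1 < 2)%N)).
have nT : (2 ^ n <= T)%N := trunc_logP (isT : (1 < 2)%N) (ltnW T2).
apply: le_trans (sum_bound L1 Hc HL T n.+1) _.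
rewrite (eq_bigr (fun _ => (4 * L) ^+ d)) => [|k _]; last exact: term_eq.
rewrite sumr_const card_ord.
have hl := last_le L1 d1 Tn.
set cl := c _ _ _ in hl *.
have A0 : 0 <= L ^+ d by apply: exprn_ge0; lra.
have F0 : 2 ^+ d <= (4 : R) ^+ d.
  by apply: lerXn2r; rewrite ?nnegrE //; lra.
have P2 : 2 <= (2 : R) ^+ d by apply: ler_eXnr => //; lra.
rewrite exprMn in hl.
have E8 : (8 : R) ^+ d = 2 ^+ d * 4 ^+ d by rewrite -exprMn; congr (_ ^+ _); lra.
set X := 4 ^+ d * L ^+ d.
have X0 : 0 <= X by apply: mulr_ge0 => //; apply: exprn_ge0.
have hl' : cl *+ T <= X by apply: le_trans hl _; rewrite /X; apply: ler_wpM2r.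
have lnT0 : 0 <= ln (T%:R : R) by apply: ln_ge0; rewrite ler1n; exact: ltnW.
have nlog : (n%:R : R) <= 2 * ln (T%:R : R).
  have h1 : ln (2 : R) *+ n <= ln (T%:R : R).
    have TP : (0 : R) < T%:R by rewrite ltr0n; exact: leq_trans (isT : (0 < 2)%N) T2.
    rewrite -lnXn // ler_ln ?posrE ?exprn_gt0 //.
    by rewrite -(natrX R 2 n) ler_nat.
  have h2 := ln2_ge R.
  have nr0 : (0 : R) <= n%:R by [].
  have h1' : ln (2 : R) * n%:R <= ln (T%:R : R) by rewrite mulr_natr.
  have h5 : 0 <= n%:R * (ln (2 : R) - 2^-1) by apply: mulr_ge0; lra.
  nra.
have G : (4 * L) ^+ d *+ n.+1 = X * (n%:R + 1) by rewrite /X natr1 mulr_natr exprMn.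
rewrite G E8 -(mulrA (2 ^+ d)) -/X.
have h3 : 0 <= (2 ^+ d - 2) * (X * (1 + ln (T%:R : R))).
  by apply: mulr_ge0; [lra | apply: mulr_ge0; lra].
have h4 : 0 <= X * (2 * ln (T%:R : R) - n%:R) by apply: mulr_ge0; lra.
nra.
Qed.
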